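(* Let $R\subset S$ be a distributive FCP ring extension. Then $\mathcal S[R,T]=\mathcal S[R,S]\cap T$ for each $T\in[R,S]$ with $T\neq R$.
   Context: All rings are commutative with identity. $[R,S]$ is the lattice of $R$-subalgebras of $S$ (meet = intersection, join = product). FCP: every chain in $[R,S]$ is finite. $T\subset U$ minimal means $[T,U]=\{T,U\}$; an atom of $[R,T]$ is $A$ with $R\subset A$ minimal and $A\subseteq T$; the socle $\mathcal S[R,T]$ is the product of all atoms of $[R,T]$. The extension is distributive if the lattice $[R,S]$ is distributive. *)

(* Defs.v *)
From HB Require Import structures.
From mathcomp Require Import all_boot all_order all_algebra.
From mathcomp Require Import boolp classical_sets cardinality.
Set Implicit Arguments. Unset Strict Implicit. Unset Printing Implicit Defensive.
Import GRing.Theory.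
Local Open Scope classical_set_scope.
Local Open Scope ring_scope.

Section RingExt.
Variable S : comPzRingType.

Definition subring (A : set S) : Prop :=
  A 1 /\ (forall x y, A x -> A y -> A (x - y)) /\ (forall x y, A x -> A y -> A (x * y)).

(* T is an element of [R,S]: an R-subalgebra of S, i.e. a subring containing R. *)
Definition interm (R T : set S) : Prop := subring T /\ R `<=` T.

Definition gen (X : set S) : set S :=
  fun x => forall B, subring B -> X `<=` B -> B x.

(* Join (product) of two elements of [R,S]: the subalgebra they generate. *)
Definition join (A B : set S) : set S := gen (A `|` B).

Definition minimal_ext (A B : set S) : Prop :=
  A `<=` B /\ A <> B /\
  forall C, interm A C -> C `<=` B -> C = A \/ C = B.

Definition atom (R T A : set S) : Prop :=
  subring A /\ minimal_ext R A /\ A `<=` T.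

(* The socle S[R,T]: product (join) of all atoms of [R,T] (equal to R if none). *)
Definition socle (R T : set S) : set S :=
  gen (R `|` (fun x => exists A, atom R T A /\ A x)).

Definition chain (R : set S) (C : set (set S)) : Prop :=
  (forall A, C A -> interm R A) /\
  (forall A B, C A -> C B -> A `<=` B \/ B `<=` A).

Definition FCP (R : set S) : Prop := forall C, chain R C -> finite_set C.

(* [R,S] is a distributive lattice (meet = intersection, join = product). *)
Definition distributive (R : set S) : Prop :=
  forall A B C, interm R A -> interm R B -> interm R C ->
    A `&` join B C = join (A `&` B) (A `&` C).

End RingExt.

(* Main.v *)
Require Import Defs.
From mathcomp Require Import all_boot all_order all_algebra.
From mathcomp Require Import boolp classical_sets cardinality.
From Stdlib Require List.
Local Open Scope classical_set_scope.

Section Aux.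
Variable S : comPzRingType.
Implicit Types X Y B R T A : set S.

Lemma gen_sub {X} : X `<=` gen X.
Proof. by move=> x Xx B _ XB; apply: XB. Qed.

Lemma gen_subring X : subring (gen X).
Proof.
split; first by move=> B [B1 _] _.
split.
- move=> x y gx gy B sB XB; have [_ [Bs _]] := sB; exact: Bs (gx B sB XB) (gy B sB XB).
- move=> x y gx gy B sB XB; have [_ [_ Bm]] := sB; exact: Bm (gx B sB XB) (gy B sB XB).
Qed.

Lemma gen_min {X B} : subring B -> X `<=` B -> gen X `<=` B.
Proof. by move=> sB XB x gx; apply: gx. Qed.

Lemma gen_mono {X Y} : X `<=` Y -> gen X `<=` gen Y.
Proof. by move=> XY x gx B sB YB; apply: gx => // y /XY; apply: YB. Qed.

Lemma subringI A B : subring A -> subring B -> subring (A `&` B).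
Proof.
move=> [A1 [As Am]] [B1 [Bs Bm]]; split; first by split.
split=> x y [ax bx] [ay byy]; split; by [apply: As | apply: Bs | apply: Am | apply: Bm].
Qed.

Definition bigU (L : list (set S)) : set S := fun y => exists A, List.In A L /\ A y.
Definition G R (L : list (set S)) : set S := gen (R `|` bigU L).

Lemma socle_subring R T : subring (socle R T).
Proof. exact: gen_subring. Qed.

Lemma key R T : subring R -> distributive R -> interm R T ->
  forall L, (forall A, List.In A L -> atom R setT A) ->
  T `&` G R L `<=` socle R T.
Proof.
move=> sR dR iT; elim=> [|A L IH] HL.
  move=> x [_ gx]; apply: (gen_mono _ _ gx) => y [Ry|[B [[] _]]]; by left.
have [sA [[RA [nRA minA]] _]] := HL A (or_introl erefl).
have IH' := IH (fun B hB => HL B (or_intror hB)).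
have iA : interm R A by split.
have iG : interm R (G R L).
  split; first exact: gen_subring.
  by move=> y Ry; apply: gen_sub; left.
have sub1 : T `&` G R (A :: L) `<=` T `&` join A (G R L).
  move=> x [Tx gx]; split => //; apply: (gen_mono _ _ gx).
  move=> y [Ry|[B [[<-|hB] By]]].
  - by right; apply: gen_sub; left.
  - by left.
  - by right; apply: gen_sub; right; exists B.
move=> x /sub1; rewrite (dR _ _ _ iT iA iG); apply: gen_min.
  exact: socle_subring.
move=> y [[Ty Ay]|Gy]; last exact: IH' Gy.
have iTA : interm R (T `&` A).
  split; first exact: subringI (proj1 iT) sA.
  by move=> z Rz; split; [apply: (proj2 iT) | apply: RA].
have [E|E] := minA _ iTA (fun z (h : (T `&` A) z) => proj2 h).
- by apply: gen_sub; left; rewrite -E.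
- apply: gen_sub; right; exists A; split => //.
  split=> //; split; first by split.
  by move=> z Az; rewrite -E in Az; case: Az.
Qed.

End Aux.
Arguments G {S}. Arguments gen_subring {S}. Arguments gen_min {S X B}. Arguments gen_mono {S X Y}. Arguments gen_sub {S X}. Arguments bigU {S}. Arguments key {S}.

Theorem corollary8p21 (S : comPzRingType) (R : set S) :
  subring R -> distributive R -> FCP R ->
  forall T : set S, interm R T -> T <> R ->
    socle R T = socle R setT `&` T.
Proof.
move=> sR dR _ T iT _; rewrite eqEsubset; split.
  move=> x sx; split.
    move: sx; apply: gen_mono => y [Ry|[A [[sA [mA _]] Ay]]]; first by left.
    by right; exists A.
  move: sx; apply: gen_min; first exact: (proj1 iT).
  move=> y [Ry|[A [[_ [_ AT]] Ay]]]; [exact: (proj2 iT) | exact: AT].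
move=> x [sx Tx].
pose P : set S := fun z => exists L : list (set S),
  (forall A, List.In A L -> atom R setT A) /\ G R L z.
have sP : subring P.
  split; first by exists nil; split => //; exact: (proj1 (gen_subring _)).
  have sub2 : forall L1 L2, G R L1 `<=` G R (L1 ++ L2) /\ G R L2 `<=` G R (L1 ++ L2).
    move=> L1 L2; split; apply: gen_mono => y [Ry|[B [hB By]]]; (try by left).
      by right; exists B; split => //; apply: List.in_or_app; left.
    by right; exists B; split => //; apply: List.in_or_app; right.
  have sapp : forall L1 L2, (forall A, List.In A L1 -> atom R setT A) ->
      (forall A, List.In A L2 -> atom R setT A) ->
      forall A, List.In A (L1 ++ L2) -> atom R setT A.
    by move=> L1 L2 H1 H2 A hA; case: (List.in_app_or _ _ _ hA); [apply: H1|apply: H2].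
  split=> a b [L1 [H1 g1]] [L2 [H2 g2]]; exists (L1 ++ L2); split;
    try apply: sapp => //; have [m1 m2] := sub2 L1 L2;
    have [_ [gs gm]] := gen_subring (R `|` bigU (L1 ++ L2)).
    by apply: gs; [apply: m1 | apply: m2].
  by apply: gm; [apply: m1 | apply: m2].
have [L [HL gx]] : P x.
  apply: (gen_min sP _ _ sx) => y [Ry|[A [aA Ay]]].
    by exists nil; split => //; apply: gen_sub; left.
  exists [:: A]; split; first by move=> B [<-|[]].
  by apply: gen_sub; right; exists A; split => //; left.
exact: (key _ _ sR dR iT _ HL x (conj Tx gx)).
Qed.
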